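(* Let $S=\mathbb{C}[x_{ij}: 1\le i\le 4,\ 1\le j\le 3]$, let $M=(x_{ij})$ be the generic $4\times 3$ matrix, and for $i=1,2,3$ let $f_i$ be the determinant of the $3\times 3$ submatrix of $M$ obtained by deleting row $i$. Then $f_1,f_2,f_3$ are cubic forms that do not form a regular sequence and whose collective strength is exactly $2$. Consequently $N(3,3)>2$.
   Context: The strength of a homogeneous element $f$ of a standard graded polynomial ring is the minimal integer $s\ge 0$ such that $f=\sum_{i=1}^{s+1}g_ih_i$ with all $g_i,h_i$ homogeneous of positive degree (or $\infty$ if none exists); constants, including $0$, have strength $-1$. The collective strength of a finite set of homogeneous elements of the same degree is the minimal strength of a nontrivial $\mathbb{C}$-linear combination of them. $N(r,d)$ denotes the least integer $N$ such that any $r$ homogeneous polynomials of degree $d$ with collective strength at least $N$ form a regular sequence. *)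

(* Defs.v *)
From mathcomp Require Import all_boot all_algebra.
From mathcomp Require Import mpoly.
From mathcomp Require Import complex.
From mathcomp Require Import reals Rstruct.
Set Implicit Arguments. Unset Strict Implicit. Unset Printing Implicit Defensive.
Import GRing.Theory.
Local Open Scope ring_scope.

Definition CC : numClosedFieldType := (Rdefinitions.R)[i].

Section Defs.
Variable n : nat.
Local Notation S := {mpoly CC[n]}.

Definition homog_pos (g : S) : Prop := exists d : nat, (0 < d)%N /\ g \is d.-homog.

Definition is_const (f : S) : Prop := exists c : CC, f = c%:MP.

Definition strength_le (f : S) (s : nat) : Prop :=
  exists g h : 'I_s.+1 -> S,
    (forall i, homog_pos (g i) /\ homog_pos (h i)) /\
    f = \sum_(i < s.+1) g i * h i.

(* strength f = s (s : int, with -1 for constants); "strength = infinity"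
   corresponds to no finite s satisfying this predicate *)
Definition strength_is (f : S) (s : int) : Prop :=
  (is_const f /\ s = (-1)%R) \/
  (~ is_const f /\ exists m : nat, s = m%:Z /\ strength_le f m /\
      forall k : nat, (k < m)%N -> ~ strength_le f k).

Definition lincomb r (fs : 'I_r -> S) (c : 'I_r -> CC) : S :=
  \sum_(i < r) c i *: fs i.

Definition nontrivial r (c : 'I_r -> CC) : Prop := exists i, c i != 0.

Definition coll_strength_ge r (fs : 'I_r -> S) (N : int) : Prop :=
  forall c, nontrivial c -> forall s : int, strength_is (lincomb fs c) s -> (N <= s)%R.

Definition coll_strength_is r (fs : 'I_r -> S) (N : int) : Prop :=
  coll_strength_ge fs N /\
  exists c, nontrivial c /\ strength_is (lincomb fs c) N.

Definition in_ideal_first r (fs : 'I_r -> S) (k : nat) (g : S) : Prop :=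
  exists a : 'I_r -> S, g = \sum_(i < r | (i < k)%N) a i * fs i.

Definition regular_seq r (fs : 'I_r -> S) : Prop :=
  (forall i : 'I_r, forall g : S,
      in_ideal_first fs i (g * fs i) -> in_ideal_first fs i g) /\
  ~ in_ideal_first fs r 1.

End Defs.

(* "N(r,d) > N": there is a polynomial ring C[x_1..x_n] and r forms of degree d
   with collective strength >= N that are not a regular sequence. Since the
   property "coll. strength >= N implies regular" is monotone in N, this is
   exactly the statement that the least such N, N(r,d), exceeds N. *)
Definition N_gt (r d : nat) (N : int) : Prop :=
  exists (n : nat) (fs : 'I_r -> {mpoly CC[n]}),
    (forall i, fs i \is d.-homog) /\ coll_strength_ge fs N /\ ~ regular_seq fs.

Definition genmx : 'M[{mpoly CC[12]}]_(4, 3) :=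
  \matrix_(i < 4, j < 3) 'X_(inord (i * 3 + j)).

(* f_i = maximal minor obtained by deleting row i (i = 0,1,2 here, i.e. 1,2,3) *)
Definition maxminor (i : 'I_3) : {mpoly CC[12]} :=
  \det (row' (widen_ord (leqnSn 3) i) genmx).

(* Main.v *)
Require Import Defs.
From mathcomp Require Import all_boot all_algebra.
From mathcomp Require Import mpoly.
From mathcomp Require Import complex reals Rstruct.
From mathcomp Require Import ring zify.
Set Implicit Arguments. Unset Strict Implicit. Unset Printing Implicit Defensive.
Local Open Scope ring_scope.
Import GRing.Theory.
Definition det3 {R : nzRingType} (f : nat -> nat -> R) : R :=
 f 0 0 * (f 1 1 * f 2 2 - f 1 2 * f 2 1) - f 0 1 * (f 1 0 * f 2 2 - f 1 2 * f 2 0)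
 + f 0 2 * (f 1 0 * f 2 1 - f 1 1 * f 2 0).

Definition lin9 {R : nzRingType} (p m : nat -> nat -> R) : R :=
  p 0 0 * m 0 0 + p 0 1 * m 0 1 + p 0 2 * m 0 2 +
  p 1 0 * m 1 0 + p 1 1 * m 1 1 + p 1 2 * m 1 2 +
  p 2 0 * m 2 0 + p 2 1 * m 2 1 + p 2 2 * m 2 2.

Definition perms : seq (seq nat) :=
  [:: [::0;1;2]; [::1;2;0]; [::2;0;1]; [::0;2;1]; [::2;1;0]; [::1;0;2]]%N.
Definition rem3 (a c : nat) : nat :=
  if (a != 0%N) && (c != 0%N) then 0%N else if (a != 1%N) && (c != 1%N) then 1%N else 2%N.
Definition cond (a b c d : nat) (s : seq nat) : bool :=
  [&& nth 0%N s a != b, nth 0%N s c != d &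
   [|| a == c, b == d | nth 0%N s (rem3 a c) != rem3 b d]].
Definition spick a b c d := nth [::0;1;2]%N perms (find (cond a b c d) perms).
Definition Tm {R : nzRingType} a b c d (i j : nat) : R :=
  if nth 0%N (spick a b c d) i == j then 1 else 0.
Definition Em {R : nzRingType} (a b i j : nat) : R :=
  if (i == a) && (j == b) then 1 else 0.

Lemma sq1_neq0 (R : nzRingType) (x : R) : x ^+ 2 = 1 -> x != 0.
Proof. by move=> h; apply/eqP=> x0; move: h; rewrite x0 expr0n /= => /eqP; rewrite eq_sym oner_eq0. Qed.

Lemma tmpl (R : comNzRingType) a b c d : (a < 3)%N -> (b < 3)%N -> (c < 3)%N -> (d < 3)%N ->
  (a != c) || (b != d) -> forall s r : R,
  det3 (fun i j => Tm a b c d i j + s * Em a b i j + r * Em c d i j) != 0.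
Proof.
case: a=> [|[|[|a]]] // _; case: b=> [|[|[|b]]] // _;
case: c=> [|[|[|c]]] // _; case: d=> [|[|[|d]]] // _.
all: move=> /= hne s r; apply: sq1_neq0; rewrite /det3 /Tm /Em /=; ring.
Qed.

Lemma lin_shift (R : comNzRingType) (p T : nat -> nat -> R) a b c d s r :
  (a < 3)%N -> (b < 3)%N -> (c < 3)%N -> (d < 3)%N ->
  lin9 p (fun i j => T i j + s * Em a b i j + r * Em c d i j) =
  lin9 p T + s * p a b + r * p c d.
Proof.
case: a=> [|[|[|a]]] // _; case: b=> [|[|[|b]]] // _;
case: c=> [|[|[|c]]] // _; case: d=> [|[|[|d]]] // _.
all: rewrite /lin9 /Em /=; ring.
Qed.

Lemma pair_good (F : fieldType) (p q : nat -> nat -> F) a b c d :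
  (a < 3)%N -> (b < 3)%N -> (c < 3)%N -> (d < 3)%N ->
  p a b * q c d - p c d * q a b != 0 ->
  exists m, [/\ lin9 p m = 0, lin9 q m = 0 & det3 m != 0].
Proof.
move=> ha hb hc hd hD.
have hne : (a != c) || (b != d).
  case: eqP => [ea|//]; case: eqP => [eb|//] /=.
  by move: hD; rewrite ea eb subrr eqxx.
set D := p a b * q c d - p c d * q a b.
set T := Tm a b c d : nat -> nat -> F.
set s := (lin9 q T * p c d - lin9 p T * q c d) / D.
set r := (lin9 p T * q a b - lin9 q T * p a b) / D.
exists (fun i j => T i j + s * Em a b i j + r * Em c d i j); split.
- rewrite lin_shift // /s /r /D; move: (lin9 p T) (lin9 q T) hD => x y hD'; field; exact: hD'.
- rewrite lin_shift // /s /r /D; move: (lin9 p T) (lin9 q T) hD => x y hD'; field; exact: hD'.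
- exact: tmpl.
Qed.

Lemma single_good (F : fieldType) (p : nat -> nat -> F) a b :
  (a < 3)%N -> (b < 3)%N -> p a b != 0 ->
  exists m, lin9 p m = 0 /\ det3 m != 0.
Proof.
move=> ha hb hp.
pose c := if a == 0%N then 1%N else 0%N.
have hc : (c < 3)%N by rewrite /c; case: (a == 0%N).
have hne : (a != c) || (b != b) by rewrite /c eqxx orbF; case: ifP => [/eqP -> | /negbT].
set T := Tm a b c b : nat -> nat -> F.
set s := - lin9 p T / p a b.
exists (fun i j => T i j + s * Em a b i j + 0 * Em c b i j); split.
- rewrite lin_shift // /s; move: (lin9 p T) => x; field; exact: hp.
- exact: tmpl.
Qed.

Lemma key3 (F : fieldType) (p q : nat -> nat -> F) :
  exists m, [/\ lin9 p m = 0, lin9 q m = 0 & det3 m != 0].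
Proof.
have [/existsP[a /existsP[b /existsP[c /existsP[d H]]]]|H] :=
  boolP [exists a : 'I_3, exists b : 'I_3, exists c : 'I_3, exists d : 'I_3,
          p a b * q c d - p c d * q a b != 0].
  exact: (pair_good (ltn_ord a) (ltn_ord b) (ltn_ord c) (ltn_ord d) H).
have e : forall a b c d, (a < 3)%N -> (b < 3)%N -> (c < 3)%N -> (d < 3)%N ->
    p a b * q c d = p c d * q a b.
  move=> a b c d ha hb hc hd; apply/eqP; rewrite -subr_eq0; apply/negPn.
  move: H; rewrite negb_exists => /forallP /(_ (Ordinal ha)).
  rewrite negb_exists => /forallP /(_ (Ordinal hb)).
  rewrite negb_exists => /forallP /(_ (Ordinal hc)).
  by rewrite negb_exists => /forallP /(_ (Ordinal hd)).
have [/existsP[a /existsP[b Hp]]|Hp] := boolP [exists a : 'I_3, exists b : 'I_3, p a b != 0].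
  have [m [m1 m2]] := single_good (ltn_ord a) (ltn_ord b) Hp.
  exists m; split => //.
  apply/(mulIf Hp).
  have ee := e _ _ _ _ (ltn_ord a) (ltn_ord b).
  have ee' : forall x y, (x < 3)%N -> (y < 3)%N -> q x y * p a b = p x y * q a b.
    by move=> x y hx hy; rewrite mulrC ee.
  rewrite mul0r; transitivity (q a b * lin9 p m); last by rewrite m1 mulr0.
  transitivity (lin9 (fun i j => q i j * p a b) m); first by rewrite /lin9; ring.
  transitivity (lin9 (fun i j => p i j * q a b) m); last by rewrite /lin9; ring.
  rewrite /lin9 /=.
  by rewrite !ee'.
have p0 : forall m, lin9 p m = 0.
  move=> m; have pz : forall a b, (a < 3)%N -> (b < 3)%N -> p a b = 0.
    move=> a b ha hb; apply/eqP; apply/negPn.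
    move: Hp; rewrite negb_exists => /forallP /(_ (Ordinal ha)).
    by rewrite negb_exists => /forallP /(_ (Ordinal hb)).
  by rewrite /lin9 !pz // !mul0r !addr0.
have [/existsP[a /existsP[b Hq]]|Hq] := boolP [exists a : 'I_3, exists b : 'I_3, q a b != 0].
  have [m [m1 m2]] := single_good (ltn_ord a) (ltn_ord b) Hq.
  by exists m; split.
have q0 : forall m, lin9 q m = 0.
  move=> m; have pz : forall a b, (a < 3)%N -> (b < 3)%N -> q a b = 0.
    move=> a b ha hb; apply/eqP; apply/negPn.
    move: Hq; rewrite negb_exists => /forallP /(_ (Ordinal ha)).
    by rewrite negb_exists => /forallP /(_ (Ordinal hb)).
  by rewrite /lin9 !pz // !mul0r !addr0.
exists (fun i j => if i == j then 1 else 0); split => //.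
by rewrite /det3 /=; apply: sq1_neq0; ring.
Qed.
Lemma sum_delta n (f : 'I_n -> CC) (j : 'I_n) :
  \sum_(i < n) f i * ((U_(i) == U_(j))%MM)%:R = f j.
Proof.
rewrite (bigD1 j) // eqxx mulr1 big1; first exact: addr0.
move=> i hij.
have -> : (U_(i) == U_(j))%MM = false.
  by apply/negP => /eqP /mnmP /(_ i); rewrite !mnm1E eqxx eq_sym (negbTE hij).
by rewrite mulr0.
Qed.


Lemma lin_eval n (p : {mpoly CC[n]}) (v : 'I_n -> CC) :
  p \is 1.-homog -> p.@[v] = \sum_(i < n) p@_U_(i) * v i.
Proof.
move=> hp.
have E : p = \sum_(i < n) p@_U_(i) *: 'X_i.
  apply/mpolyP => m; rewrite raddf_sum.
  under eq_bigr => i _ do (rewrite /=; rewrite mcoeffZ mcoeffX).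
  have [/mdeg1P[j /eqP ->]|hm] := boolP (mdeg m == 1%N).
    by rewrite sum_delta.
  rewrite (dhomog_nemf_coeff hp) ?hm // big1 // => i _.
  have : (U_(i) != m)%MM by apply: contraNneq hm => <-; rewrite mdeg1.
  by move/negbTE => ->; rewrite mulr0.
rewrite {1}E raddf_sum; apply: eq_bigr => i _; by rewrite /= mevalZ mevalXU.
Qed.

Lemma det3E (R : comNzRingType) (f : nat -> nat -> R) :
  \det (\matrix_(i < 3, j < 3) f i j) = det3 f.
Proof.
rewrite (expand_det_row _ ord0) !big_ord_recr big_ord0 /= /cofactor.
rewrite !(expand_det_row _ ord0) !big_ord_recr big_ord0 /= /cofactor.
rewrite !det_mx11 !mxE /=.
rewrite !big_ord0 /bump /= ?addn0 ?add0n ?addn1 /det3 ?expr0 ?expr1 ?expr2; ring.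
Qed.

Lemma det3M (R : comNzRingType) (M : 'M[R]_3) :
  \det M = det3 (fun i j => M (inord i) (inord j)).
Proof.
rewrite -det3E; congr (\det _); apply/matrixP => i j; by rewrite mxE !inord_val.
Qed.

Lemma det3_ext (R : nzRingType) (f g : nat -> nat -> R) :
  (forall a b, (a < 3)%N -> (b < 3)%N -> f a b = g a b) -> det3 f = det3 g.
Proof. by move=> H; rewrite /det3 !H. Qed.

Lemma det3_rmorph (R S : comNzRingType) (h : {rmorphism R -> S}) (f : nat -> nat -> R) :
  h (det3 f) = det3 (fun a b => h (f a b)).
Proof. by rewrite /det3 !(rmorphB, rmorphD, rmorphM). Qed.

Lemma det3_homog n (R : comNzRingType) (f : nat -> nat -> {mpoly R[n]}) :
  (forall a b, f a b \is 1.-homog) -> det3 f \is 3.-homog.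
Proof.
move=> H.
have h2 : forall a b c d, f a b * f c d \is 2.-homog.
  by move=> a b c d; apply: (dhomogM (H a b) (H c d)).
have h3 : forall a b c d e g, f a b * (f c d * f e g - f e g * f c d) \is 3.-homog.
  move=> *; apply: (dhomogM (H _ _)); exact: rpredB.
rewrite /det3; apply: rpredD; first apply: rpredB.
- apply: (dhomogM (H _ _)); apply: rpredB; exact: h2.
- apply: (dhomogM (H _ _)); apply: rpredB; exact: h2.
- apply: (dhomogM (H _ _)); apply: rpredB; exact: h2.
Qed.

Definition rowof (q : nat) : nat :=
  match q with 0|1|2 => 0 | 3|4|5 => 1 | 6|7|8 => 2 | _ => 3 end%N.
Definition colof (q : nat) : nat :=
  match q with 0|3|6|9 => 0 | 1|4|7|10 => 1 | _ => 2 end%N.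
Definition idx (r c : nat) : nat :=
  match r with 0 => c | 1 => c.+3 | 2 => c.+3.+3 | _ => c.+3.+3.+3 end%N.
Definition sel (i a : nat) : nat :=
  nth 0%N (match i with 0 => [::1;2;3] | 1 => [::0;2;3] | _ => [::0;1;3] end)%N a.
Definition xv (r c : nat) : {mpoly CC[12]} := 'X_(inord (idx r c)).
Definition pt (X : nat -> nat -> CC) (q : 'I_12) : CC := X (rowof q) (colof q).

Lemma xv_homog r c : xv r c \is 1.-homog.
Proof. by rewrite /xv dhomogX; apply/eqP; apply: mdeg1. Qed.

Lemma maxminorE (i : 'I_3) : maxminor i = det3 (fun a b => xv (sel i a) b).
Proof.
rewrite /maxminor det3M; apply: det3_ext => a b ha hb.
rewrite !mxE /xv; congr ('X_ _).
apply/val_inj; rewrite /= !inordK //.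
all: case: i => [[|[|[|//]]] hi]; case: a ha => [|[|[|//]]] _; case: b hb => [|[|[|//]]] _ //.
Qed.

Lemma maxminor_homog (i : 'I_3) : maxminor i \is 3.-homog.
Proof. by rewrite maxminorE; apply: det3_homog => a b; exact: xv_homog. Qed.

Lemma xv_eval X r c : (idx r c < 12)%N ->
  (xv r c).@[pt X] = X (rowof (idx r c)) (colof (idx r c)).
Proof. by move=> h; rewrite /xv mevalXU /pt inordK. Qed.

Lemma maxminor_eval (i : 'I_3) X :
  (maxminor i).@[pt X] = det3 (fun a b => X (sel i a) b).
Proof.
rewrite maxminorE (det3_rmorph (meval (pt X))); apply: det3_ext => a b ha hb.
have hid : (idx (sel i a) b < 12)%N.
  by case: i => [[|[|[|//]]] hi]; case: a ha => [|[|[|//]]] _; case: b hb => [|[|[|//]]] _.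
apply: eq_trans (xv_eval X hid) _; clear hid.
by case: i => [[|[|[|//]]] hi]; case: a ha => [|[|[|//]]] _; case: b hb => [|[|[|//]]] _.
Qed.

Definition Xk (k : nat) (m : nat -> nat -> CC) (r c : nat) : CC :=
  match k, r with
  | O, O => 0 | O, S O => m 0%N c | O, S (S O) => m 1%N c | O, _ => m 2%N c
  | S O, O => m 0%N c | S O, S O => 0 | S O, S (S O) => m 1%N c | S O, _ => m 2%N c
  | _, O => m 0%N c | _, S O => m 1%N c | _, S (S O) => 0 | _, _ => m 2%N c
  end.

Lemma slice_minor (i : 'I_3) k m : (k < 3)%N ->
  (maxminor i).@[pt (Xk k m)] = if val i == k then det3 m else 0.
Proof.
rewrite maxminor_eval.
case: i => [[|[|[|//]]] hi]; case: k => [|[|[|//]]] _; rewrite /det3 /Xk /sel /=; ring.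
Qed.

Lemma lincomb_eval (c : 'I_3 -> CC) v :
  (lincomb maxminor c).@[v] = \sum_(i < 3) c i * (maxminor i).@[v].
Proof. by rewrite /lincomb raddf_sum; apply: eq_bigr => i _; rewrite /= mevalZ. Qed.

Lemma F_slice (c : 'I_3 -> CC) (k : 'I_3) m :
  (lincomb maxminor c).@[pt (Xk k m)] = c k * det3 m.
Proof.
rewrite lincomb_eval.
under eq_bigr => i _ do rewrite slice_minor //.
rewrite (bigD1 k) // eqxx big1; first exact: addr0.
by move=> i hik; rewrite (negbTE (hik : (val i != val k))) mulr0.
Qed.

Lemma lin_slice0 (a : nat -> CC) (k : nat) m : (k < 3)%N ->
  \sum_(i < 12) a i * pt (Xk k m) i = lin9 (fun i j => a (idx (sel k i) j)) m.
Proof.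
move=> hk; rewrite !big_ord_recr big_ord0 /=.
case: k hk => [|[|[|//]]] _; rewrite /lin9 /pt /Xk /sel /=; ring.
Qed.

Lemma lin_slice (l : {mpoly CC[12]}) (k : nat) m : (k < 3)%N -> l \is 1.-homog ->
  l.@[pt (Xk k m)] = lin9 (fun i j => l@_U_(inord (idx (sel k i) j))) m.
Proof.
move=> hk hl; rewrite lin_eval //.
under eq_bigr => i _ do rewrite -[X in mnm1 X]inord_val.
exact: (lin_slice0 (fun q => l@_U_(inord q))).
Qed.

Lemma term_red n (g h : {mpoly CC[n]}) : homog_pos g -> homog_pos h ->
  exists l q, l \is 1.-homog /\ pihomog mdeg 3 (g * h) = l * q.
Proof.
move=> [d [d0 hg]] [e [e0 he]].
have hgh := dhomogM hg he.
have [de3|de3] := eqVneq (d + e)%N 3%N; last first.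
  exists 0, 0; split; first exact: dhomog0.
  by rewrite mulr0 (pihomog_ne0 de3 hgh).
rewrite pihomog_dE; last by rewrite -de3.
case: d d0 hg hgh de3 => [|[|[|d]]] // _ hg hgh de3.
- by exists g, h.
- have e1 : e = 1%N by lia.
  by exists h, g; rewrite -e1 mulrC.
- lia.
Qed.

Lemma red2 n (F : {mpoly CC[n]}) : F \is 3.-homog -> strength_le F 1 ->
  exists l0 q0 l1 q1, [/\ l0 \is 1.-homog, l1 \is 1.-homog & F = l0 * q0 + l1 * q1].
Proof.
move=> hF [g [h [H E]]].
rewrite !big_ord_recr big_ord0 /= add0r in E.
have [l0 [q0 [h0 e0]]] := term_red (H (widen_ord (leqnSn 1) ord_max)).1
                                    (H (widen_ord (leqnSn 1) ord_max)).2.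
have [l1 [q1 [h1 e1]]] := term_red (H ord_max).1 (H ord_max).2.
exists l0, q0, l1, q1; split => //.
by rewrite -(pihomog_dE hF) E pihomogD e0 e1.
Qed.

Lemma lincomb_homog (c : 'I_3 -> CC) : lincomb maxminor c \is 3.-homog.
Proof. by rewrite /lincomb; apply: rpred_sum => i _; apply: rpredZ; exact: maxminor_homog. Qed.

Lemma no_str1 (c : 'I_3 -> CC) : nontrivial c -> ~ strength_le (lincomb maxminor c) 1.
Proof.
move=> [k hk] hs.
have [l0 [q0 [l1 [q1 [h0 h1 E]]]]] := red2 (lincomb_homog c) hs.
pose p := fun i j => l0@_U_(inord (idx (sel k i) j)).
pose q := fun i j => l1@_U_(inord (idx (sel k i) j)).
have [m [m0 m1 md]] := key3 p q.
move: (F_slice c k m); rewrite E mevalD !mevalM.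
rewrite (@lin_slice l0 k m (ltn_ord k) h0) (@lin_slice l1 k m (ltn_ord k) h1).
rewrite -/p -/q m0 m1 !mul0r addr0 => /esym /eqP.
by rewrite mulf_eq0 (negbTE hk) (negbTE md).
Qed.

Lemma F_nonconst (c : 'I_3 -> CC) : nontrivial c -> ~ is_const (lincomb maxminor c).
Proof.
move=> [k hk] [C E].
have [m [_ _ md]] := key3 (fun _ _ => 0 : CC) (fun _ _ => 0).
have e1 := F_slice c k m.
have e2 := F_slice c k (fun _ _ => 0).
rewrite E mevalC in e1; rewrite E mevalC in e2.
have : det3 (fun _ _ => 0 : CC) = 0 by rewrite /det3; ring.
move=> z; rewrite z mulr0 in e2; rewrite e2 in e1.
by move/eqP: e1; rewrite eq_sym mulf_eq0 (negbTE hk) (negbTE md).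
Qed.

Lemma homog_pos0 n : homog_pos (0 : {mpoly CC[n]}).
Proof. by exists 1%N; split => //; exact: dhomog0. Qed.

Lemma str0to1 n (F : {mpoly CC[n]}) : strength_le F 0 -> strength_le F 1.
Proof.
move=> [g [h [H E]]].
exists (fun i : 'I_2 => if val i == 0%N then g ord0 else 0).
exists (fun i : 'I_2 => if val i == 0%N then h ord0 else 0).
split.
  by move=> i; case: ifP => _; [exact: H | split; exact: homog_pos0].
rewrite E !big_ord_recr !big_ord0 /= !add0r mulr0 addr0.
by congr (g _ * h _); apply/val_inj.
Qed.

Lemma F_str2 (c : 'I_3 -> CC) : nontrivial c ->
  forall s, strength_is (lincomb maxminor c) s -> (2 <= s)%R.
Proof.
move=> hc s [[hC _]|[_ [mm [-> [hle hmin]]]]]; first by have := F_nonconst hc hC.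
rewrite lez_nat.
case: mm hle hmin => [|[|mm]] hle hmin //.
- by have := no_str1 hc (str0to1 hle).
- by have := no_str1 hc hle.
Qed.

Definition cf0 : 'I_3 -> CC := fun i => if val i == 0%N then 1 else 0.

Lemma cf0_nt : nontrivial cf0.
Proof. by exists ord0; rewrite /cf0 /= oner_neq0. Qed.

Lemma lincomb_cf0 : lincomb maxminor cf0 = maxminor ord0.
Proof.
rewrite /lincomb (bigD1 ord0) // big1 => [|i hi].
  by rewrite /cf0 /= scale1r; exact: addr0.
by rewrite /cf0 (negbTE (hi : val i != 0%N)) scale0r.
Qed.

Lemma str_le_f0 : strength_le (maxminor ord0) 2.
Proof.
rewrite maxminorE.
exists (fun i : 'I_3 => match val i with O => xv 1 0 | S O => - xv 1 1 | _ => xv 1 2 end).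
exists (fun i : 'I_3 => match val i with
   | O => xv 2 1 * xv 3 2 - xv 2 2 * xv 3 1
   | S O => xv 2 0 * xv 3 2 - xv 2 2 * xv 3 0
   | _ => xv 2 0 * xv 3 1 - xv 2 1 * xv 3 0 end).
split.
  have h2 : forall a b c d, xv a b * xv c d - xv a d * xv c b \is 2.-homog.
    by move=> a b c d; apply: rpredB; apply: (dhomogM (xv_homog _ _) (xv_homog _ _)).
  move=> [[|[|[|//]]] hi] /=; split.
  - by exists 1%N; split => //; exact: xv_homog.
  - by exists 2%N; split => //; exact: h2.
  - by exists 1%N; split => //; rewrite rpredN; exact: xv_homog.
  - by exists 2%N; split => //; exact: h2.
  - by exists 1%N; split => //; exact: xv_homog.
  - by exists 2%N; split => //; exact: h2.
rewrite !big_ord_recr big_ord0 /= /det3 /sel /=; ring.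
Qed.

Definition X0 (r c : nat) : CC := if r == 3%N then (c == 1%N)%:R else (c == 0%N)%:R.

Lemma not_reg : ~ regular_seq maxminor.
Proof.
move=> [H _].
pose g := xv 3 1 * xv 2 0 - xv 3 0 * xv 2 1.
pose a0 := - (xv 3 1 * xv 0 0 - xv 3 0 * xv 0 1).
pose a1 := xv 3 1 * xv 1 0 - xv 3 0 * xv 1 1.
have two : (2 < 3)%N by [].
have hin : in_ideal_first maxminor (Ordinal two) (g * maxminor (Ordinal two)).
  exists (fun i : 'I_3 => if val i == 0%N then a0 else a1).
  rewrite big_mkcond !big_ord_recr big_ord0 /= !maxminorE /det3 /sel /= /g /a0 /a1; ring.
have [a' E] := H (Ordinal two) g hin.
have fz : forall i : 'I_3, (i < 2)%N -> (maxminor i).@[pt X0] = 0.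
  move=> i; rewrite maxminor_eval; case: i => [[|[|//]] hi] _; rewrite /det3 /X0 /sel /=; ring.
have g1 : g.@[pt X0] = 1.
  rewrite /g !mevalB !mevalM !xv_eval // /X0 /=; ring.
move: (congr1 (meval (pt X0)) E); rewrite g1 raddf_sum big1.
  by move/eqP; rewrite oner_eq0.
by move=> i hi; rewrite /= mevalM fz // mulr0.
Qed.

Theorem theorem7p4 :
  (forall i : 'I_3, maxminor i \is 3.-homog) /\
  ~ regular_seq maxminor /\
  coll_strength_is maxminor 2 /\
  N_gt 3 3 2.
Proof.
split; first exact: maxminor_homog.
split; first exact: not_reg.
split.
  split; first exact: F_str2.
  exists cf0; split; first exact: cf0_nt.
  right; split; first exact: (F_nonconst cf0_nt).
  exists 2%N; split => //; split; first by rewrite lincomb_cf0; exact: str_le_f0.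
  move=> [|[|//]] _ h.
  - exact: (no_str1 cf0_nt (str0to1 h)).
  - exact: (no_str1 cf0_nt h).
exists 12%N, maxminor; split; first exact: maxminor_homog.
split; first exact: F_str2.
exact: not_reg.
Qed.
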